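(* Let $K\subseteq\mathbb{C}$ be a number field of class number $1$ that is stable under complex conjugation, let $\mathcal{O}_K$ be its ring of integers and $K_0:=K\cap\mathbb{R}$. Let $n$ be odd. If $v\in\mathcal{O}_K^n$ is a column of a matrix $A\in\mathcal{O}_K^{n\times n}$ with $A^*A=\lambda I$ where $\lambda=v^*v$, then there exists $r\in\mathcal{O}_K$ with $\lambda=r\overline{r}$ (and $\lambda\in\mathcal{O}_{K_0}$).
   Context: $A^*=\overline{A}^T$ denotes the conjugate transpose. In particular (taking $K=\mathbb{Q}(i)$), if $n$ is odd and $v\in\mathbb{Z}[i]^n$ is a column of an $n\times n$ Gaussian integer matrix $A$ with $A^*A=\lambda I$, then $\lambda$ is a sum of two squares of rational integers. *)

(* Defs.v *)
From HB Require Import structures.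
From mathcomp Require Import all_boot all_order all_algebra all_field.
Set Implicit Arguments. Unset Strict Implicit. Unset Printing Implicit Defensive.
Import Order.TTheory GRing.Theory Num.Theory.
Local Open Scope ring_scope.

(* Subfields of C are modelled as predicates on algC (the algebraic complex
   numbers); every number field K ⊆ C lies inside algC. *)

Definition is_subfieldC (K : {pred algC}) : Prop :=
  [/\ 0 \in K, 1 \in K,
      (forall x y, x \in K -> y \in K -> x - y \in K),
      (forall x y, x \in K -> y \in K -> x * y \in K) &
      (forall x, x \in K -> x^-1 \in K)].

Definition finite_dim_over_Q (K : {pred algC}) : Prop :=
  exists (m : nat) (b : 'I_m -> algC),
    forall x, x \in K -> exists c : 'I_m -> rat, x = \sum_(i < m) ratr (c i) * b i.

Definition number_field (K : {pred algC}) : Prop :=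
  is_subfieldC K /\ finite_dim_over_Q K.

Definition conj_stable (K : {pred algC}) : Prop :=
  forall x, x \in K -> x^* \in K.

Definition ring_of_integers (K : {pred algC}) : {pred algC} :=
  [pred x | (x \in K) && (x \in Aint)].

Definition is_ideal_of (O : {pred algC}) (I : {pred algC}) : Prop :=
  [/\ {subset I <= O}, 0 \in I,
      (forall x y, x \in I -> y \in I -> x + y \in I) &
      (forall a x, a \in O -> x \in I -> a * x \in I)].

Definition class_number_one (K : {pred algC}) : Prop :=
  forall I : {pred algC}, is_ideal_of (ring_of_integers K) I ->
    exists2 g, g \in ring_of_integers K &
      forall x, x \in I <-> exists2 a, a \in ring_of_integers K & x = a * g.

Definition conjT (m n : nat) (A : 'M[algC]_(m, n)) : 'M[algC]_(n, m) :=
  (map_mx Num.conj A)^T.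

(* Main.v *)
Require Import Defs.
From HB Require Import structures.
From mathcomp Require Import all_boot all_order all_algebra all_field.
From mathcomp Require Import boolp ring.
Import Order.TTheory GRing.Theory Num.Theory.
Local Open Scope ring_scope.

Section OK.
Variable K : {pred algC}.
Hypothesis sK : is_subfieldC K.
Hypothesis cK : conj_stable K.
Local Notation OK := (ring_of_integers K).

Lemma ok0 : 0 \in OK.
Proof. by case: sK => h0 _ _ _ _; rewrite inE h0 Aint0. Qed.
Lemma ok1 : 1 \in OK.
Proof. by case: sK => _ h1 _ _ _; rewrite inE h1 Aint1. Qed.
Lemma okB x y : x \in OK -> y \in OK -> x - y \in OK.
Proof.
case: sK => _ _ hB _ _; rewrite !inE => /andP[kx ax] /andP[ky ay].
by rewrite hB // rpredB.
Qed.
Lemma okN x : x \in OK -> - x \in OK.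
Proof. by move=> hx; rewrite -sub0r okB // ok0. Qed.
Lemma okD x y : x \in OK -> y \in OK -> x + y \in OK.
Proof. by move=> hx hy; rewrite -[y]opprK okB // okN. Qed.
Lemma okM x y : x \in OK -> y \in OK -> x * y \in OK.
Proof.
case: sK => _ _ _ hM _; rewrite !inE => /andP[kx ax] /andP[ky ay].
by rewrite hM // rpredM.
Qed.
Lemma okC x : x \in OK -> x^* \in OK.
Proof.
rewrite !inE => /andP[kx ax]; rewrite cK //=.
by rewrite (Aint_aut Num.conj).
Qed.
Lemma okX x k : x \in OK -> x ^+ k \in OK.
Proof. by move=> hx; elim: k => [|k ih]; rewrite ?ok1 // exprS okM. Qed.

Lemma okS (b : bool) : (-1) ^+ b \in OK.
Proof. by case: b; rewrite ?expr1 ?expr0 ?okN ?ok1. Qed.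

Hypothesis pid : class_number_one K.

Lemma key a c l : a \in OK -> c \in OK -> l \in OK -> c != 0 ->
  a * a^* = l * (c * c^*) -> exists2 t, t \in OK & l = t * t^*.
Proof.
move=> aO cO lO c0 E.
pose I : {pred algC} := fun z => `[< exists x, exists y,
   [/\ x \in OK, y \in OK & z = a * x + c * y] >].
have II : is_ideal_of OK I.
  split.
  - move=> z /asboolP [x [y [xO yO ->]]].
    by rewrite okD // okM.
  - apply/asboolP; exists 0, 0; split; rewrite ?ok0 //; ring.
  - move=> z w /asboolP [x [y [xO yO ->]]] /asboolP [x' [y' [xO' yO' ->]]].
    apply/asboolP; exists (x + x'), (y + y'); split; rewrite ?okD //; ring.
  - move=> b z bO /asboolP [x [y [xO yO ->]]].
    apply/asboolP; exists (b * x), (b * y); split; rewrite ?okM //; ring.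
have [g gO gI] := pid _ II.
have [a' a'O ea] : exists2 a', a' \in OK & a = a' * g.
  apply/gI/asboolP; exists 1, 0; split; rewrite ?ok0 ?ok1 //; ring.
have [c' c'O ec] : exists2 c', c' \in OK & c = c' * g.
  apply/gI/asboolP; exists 0, 1; split; rewrite ?ok0 ?ok1 //; ring.
have gII : g \in I by apply/gI; exists 1; rewrite ?ok1 ?mul1r.
move/asboolP: gII => [x [y [xO yO eg]]].
have g0 : g != 0 by apply: contraNneq c0 => h0; rewrite ec h0 mulr0.
have c'0 : c' != 0 by apply: contraNneq c0 => h0; rewrite ec h0 mul0r.
have B : a' * x + c' * y = 1.
  apply: (mulIf g0); rewrite mul1r [in RHS]eg ea ec; ring.
have gg0 : g * g^* != 0 by rewrite mulf_neq0 // conjC_eq0.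
have E' : a' * a'^* = l * (c' * c'^*).
  apply: (mulIf gg0); move: E; rewrite ea ec !rmorphM /= => E.
  by rewrite -[LHS]/(_) ; transitivity (a' * g * (a'^* * g^*)); [ring | rewrite E; ring].
exists (l * c' * x^* + a' * y^*).
  by rewrite okD ?okM ?okC.
have Bc : a'^* * x^* + c'^* * y^* = 1.
  by rewrite -!rmorphM -rmorphD B rmorph1.
have T : (l * c' * x^* + a' * y^*) * c'^* = a'.
  transitivity (a' * (a'^* * x^* + c'^* * y^*)); last by rewrite Bc mulr1.
  transitivity (l * (c' * c'^*) * x^* + a' * c'^* * y^*); first ring.
  rewrite -E'; ring.
set t := (l * c' * x^* + a' * y^*) in T *.
have cc0 : c' * c'^* != 0 by rewrite mulf_neq0 // conjC_eq0.
apply: (mulIf cc0).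
transitivity ((t * c'^*) * (t * c'^*)^*); last by rewrite rmorphM /= conjCK; ring.
by rewrite T E'.
Qed.

End OK.

Theorem mainTheorem2 (K : {pred algC}) (n : nat) (A : 'M[algC]_n) (j : 'I_n) :
  number_field K -> class_number_one K -> conj_stable K ->
  odd n ->
  (forall i k, A i k \in ring_of_integers K) ->
  let lambda := (conjT (col j A) *m col j A) 0 0 in
  conjT A *m A = lambda%:M ->
  (exists2 r, r \in ring_of_integers K & lambda = r * r^*) /\
  (lambda \in ring_of_integers K /\ lambda \is Num.real).
Proof.
move=> [sK _] pid cK on AO lambda eA.
have lE : lambda = \sum_i (A i j)^* * A i j.
  by rewrite /lambda mxE; apply: eq_bigr => i _; rewrite !mxE.
have lO : lambda \in ring_of_integers K.
  rewrite lE; elim/big_ind: _ => [|x y|i _]; first exact: (@ok0 K sK).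
  - exact: (@okD K sK).
  - by apply: (@okM K sK); [apply: (@okC K cK)|]; apply: AO.
have lR : lambda^* = lambda.
  rewrite lE rmorph_sum /=; apply: eq_bigr => i _.
  by rewrite rmorphM /= conjCK mulrC.
split; last by split => //; rewrite CrealE lR.
have hd : \det A * (\det A)^* = lambda ^+ n.
  rewrite -det_scalar -eA det_mulmx mulrC; congr (_ * _).
  by rewrite /conjT det_tr det_map_mx.
have [k ek] : exists k, n = k.*2.+1.
  by exists n./2; rewrite -[in LHS](odd_double_half n) on.
have [->|l0] := eqVneq lambda 0.
  by exists 0; rewrite ?(@ok0 K sK) // mul0r.
apply: (@key K sK cK pid (\det A) (lambda ^+ k)) => //.
- rewrite /determinant; elim/big_ind: _ => [|x y|s _]; first exact: (@ok0 K sK).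
  + exact: (@okD K sK).
  + apply: (@okM K sK); first exact: (@okS K sK).
    elim/big_ind: _ => [|x y|i _]; [exact: (@ok1 K sK)|exact: (@okM K sK)|exact: AO].
- exact: (@okX K sK).
- by rewrite expf_neq0.
- by rewrite hd rmorphXn /= lR -exprD addnn -exprS -ek.
Qed.
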